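(* Let $(f^*,g^* )$ be a stationary $\hat\beta$-discounted Nash equilibrium of a two-player discrete time stochastic game for some $\hat\beta\in[0,1)$, and suppose: (C1) $(f^*,g^* )$ is pure, i.e. for each $s\in S$ there are actions $a^1_s\in A^1(s)$, $a^2_s\in A^2(s)$ with $f^*(s,a^1_s)=1$, $g^*(s,a^2_s)=1$; (C2) there exist $p_s\ge0$ ($s\in S$) with $\sum_{s\in S}p_s=1$ such that $P(f^*,g^* )_{ss'}=p_{s'}$ for all $s,s'\in S$ (every row of $P(f^*,g^* )$ equals $(p_1,\dots,p_{|S|})$); (C3) for all $s\in S$ and $a^1\in A^1(s)$: $\sum_{s'\in S}p_{s'}r^1(s',a^1_{s'},a^2_{s'})\ge\sum_{s'\in S}p(s'\mid s,a^1,a^2_s)\,r^1(s',a^1_{s'},a^2_{s'})$, and for all $s\in S$ and $a^2\in A^2(s)$: $\sum_{s'\in S}p_{s'}r^2(s',a^1_{s'},a^2_{s'})\ge\sum_{s'\in S}p(s'\mid s,a^1_s,a^2)\,r^2(s',a^1_{s'},a^2_{s'})$. Then $(f^*,g^* )$ is a Blackwell-Nash equilibrium.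
   Context: A two-player discrete time stochastic game consists of a finite state set $S$, finite nonempty action sets $A^1(s),A^2(s)$ for each $s\in S$, reward functions $r^i(s,a^1,a^2)$ for $i=1,2$, and transition probabilities $p(s'\mid s,a^1,a^2)$. A stationary strategy of player 1 is $f=(f(s))_{s\in S}$ with $f(s)$ a probability distribution on $A^1(s)$, $f(s,a^1)$ denoting the probability of $a^1$; similarly $g$ for player 2. For a stationary pair $(f,g)$ let $r^i(s,f,g)=\sum_{a^1,a^2}f(s,a^1)g(s,a^2)r^i(s,a^1,a^2)$ and $P(f,g)$ the $|S|\times|S|$ matrix with entries $P(f,g)_{ss'}=\sum_{a^1,a^2}f(s,a^1)g(s,a^2)p(s'\mid s,a^1,a^2)$. For $\beta\in[0,1)$ the $\beta$-discounted payoff vector of player $i$ is $v^i_\beta(f,g)=(I-\beta P(f,g))^{-1}r^i(f,g)$, with $s$-th component $v^i_\beta(s,f,g)$. A stationary pair $(f^*,g^* )$ is a $\beta$-discounted Nash equilibrium if for all $s\in S$, $v^1_\beta(s,f^*,g^* )\ge v^1_\beta(s,f,g^* )$ for all stationary $f$ and $v^2_\beta(s,f^*,g^* )\ge v^2_\beta(s,f^*,g)$ for all stationary $g$. A stationary pair is a Blackwell-Nash equilibrium (BNE) if there is $\beta_0\in[0,1)$ such that it is a $\beta$-discounted Nash equilibrium for every $\beta\in[\beta_0,1)$. *)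

(* Defs.v *)
(* States are 'I_n (any finite state set S), the number
   field is an arbitrary realFieldType R (the paper: R = reals). *)
From HB Require Import structures.
From mathcomp Require Import all_boot all_order all_algebra.
Set Implicit Arguments. Unset Strict Implicit. Unset Printing Implicit Defensive.
Import Order.TTheory GRing.Theory Num.Theory.
Local Open Scope ring_scope.

Record game (R : realFieldType) (n : nat) := Game {
  A1 : 'I_n -> finType;
  A2 : 'I_n -> finType;
  rew1 : forall s : 'I_n, A1 s -> A2 s -> R;
  rew2 : forall s : 'I_n, A1 s -> A2 s -> R;
  trans : forall s : 'I_n, A1 s -> A2 s -> 'I_n -> R  (* trans s a1 a2 s' = p(s'|s,a1,a2) *)
}.
Arguments A1 {R n} g s : rename.
Arguments A2 {R n} g s : rename.
Arguments rew1 {R n} g s _ _ : rename.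
Arguments rew2 {R n} g s _ _ : rename.
Arguments trans {R n} g s _ _ _ : rename.

Definition game_wf (R : realFieldType) (n : nat) (G : game R n) : Prop :=
  (forall s, 0 < #|A1 G s|)%N /\ (forall s, 0 < #|A2 G s|)%N /\
  (forall s a1 a2 s', 0 <= trans G s a1 a2 s') /\
  (forall s a1 a2, \sum_(s' < n) trans G s a1 a2 s' = 1).

Definition strat1 (R : realFieldType) (n : nat) (G : game R n) :=
  forall s : 'I_n, A1 G s -> R.
Definition strat2 (R : realFieldType) (n : nat) (G : game R n) :=
  forall s : 'I_n, A2 G s -> R.

Definition is_strat1 (R : realFieldType) (n : nat) (G : game R n) (f : strat1 G) : Prop :=
  (forall s a, 0 <= f s a) /\ (forall s, \sum_(a : A1 G s) f s a = 1).
Definition is_strat2 (R : realFieldType) (n : nat) (G : game R n) (g : strat2 G) : Prop :=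
  (forall s a, 0 <= g s a) /\ (forall s, \sum_(a : A2 G s) g s a = 1).

Definition rew1_fg (R : realFieldType) (n : nat) (G : game R n)
  (f : strat1 G) (g : strat2 G) : 'cV[R]_n :=
  \col_s \sum_(a1 : A1 G s) \sum_(a2 : A2 G s) f s a1 * g s a2 * rew1 G s a1 a2.
Definition rew2_fg (R : realFieldType) (n : nat) (G : game R n)
  (f : strat1 G) (g : strat2 G) : 'cV[R]_n :=
  \col_s \sum_(a1 : A1 G s) \sum_(a2 : A2 G s) f s a1 * g s a2 * rew2 G s a1 a2.

Definition P_fg (R : realFieldType) (n : nat) (G : game R n)
  (f : strat1 G) (g : strat2 G) : 'M[R]_n :=
  \matrix_(s, s') \sum_(a1 : A1 G s) \sum_(a2 : A2 G s)
      f s a1 * g s a2 * trans G s a1 a2 s'.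

Definition v1 (R : realFieldType) (n : nat) (G : game R n) (beta : R)
  (f : strat1 G) (g : strat2 G) : 'cV[R]_n :=
  invmx (1%:M - beta *: P_fg f g) *m rew1_fg f g.
Definition v2 (R : realFieldType) (n : nat) (G : game R n) (beta : R)
  (f : strat1 G) (g : strat2 G) : 'cV[R]_n :=
  invmx (1%:M - beta *: P_fg f g) *m rew2_fg f g.

Definition disc_NE (R : realFieldType) (n : nat) (G : game R n) (beta : R)
  (fs : strat1 G) (gs : strat2 G) : Prop :=
  forall s : 'I_n,
    (forall f : strat1 G, is_strat1 f -> v1 beta f gs s 0 <= v1 beta fs gs s 0) /\
    (forall g : strat2 G, is_strat2 g -> v2 beta fs g s 0 <= v2 beta fs gs s 0).

Definition BNE (R : realFieldType) (n : nat) (G : game R n)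
  (fs : strat1 G) (gs : strat2 G) : Prop :=
  exists beta0 : R, 0 <= beta0 < 1 /\
    forall beta : R, beta0 <= beta < 1 -> disc_NE beta fs gs.

(* Main.v *)
Require Import Defs.
From HB Require Import structures.
From mathcomp Require Import all_boot all_order all_algebra.
From mathcomp Require Import ring lra.
Set Implicit Arguments. Unset Strict Implicit. Unset Printing Implicit Defensive.
Import Order.TTheory GRing.Theory Num.Theory.
Local Open Scope ring_scope.

Definition stochm (R : realFieldType) (n : nat) (Q : 'M[R]_n) : Prop :=
  (forall i j, 0 <= Q i j) /\ (forall i, \sum_j Q i j = 1).

Lemma min_ex (R : realFieldType) (n : nat) (F : 'I_n -> R) (i0 : 'I_n) :
  exists i, forall j, F i <= F j.
Proof.
have [i _ Hi] := @Order.TotalTheory.arg_minP _ R 'I_n i0 xpredT F isT.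
by exists i => j; apply: Hi.
Qed.

Lemma entryM (R : realFieldType) (n : nat) (Q : 'M[R]_n) (b : R) (x : 'cV[R]_n) i :
  ((1%:M - b *: Q) *m x) i 0 = x i 0 - b * \sum_j Q i j * x j 0.
Proof.
by rewrite mulmxBl mul1mx -scalemxAl !mxE.
Qed.

Lemma nonneg_sol (R : realFieldType) (n : nat) (Q : 'M[R]_n) (b : R) (x : 'cV[R]_n) :
  stochm Q -> 0 <= b < 1 ->
  (forall i, b * \sum_j Q i j * x j 0 <= x i 0) -> forall i, 0 <= x i 0.
Proof.
move=> [Q0 Q1] /andP[b0 b1] H i.
have [m Hm] := min_ex (fun j => x j 0) i.
suff: 0 <= x m 0 by move=> h; apply: le_trans h (Hm i).
have h1 : b * x m 0 <= x m 0.
  apply: le_trans (H m); apply: (ler_wpM2l b0).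
  rewrite -[x m 0]mul1r -(Q1 m) mulr_suml; apply: ler_sum => j _.
  by apply: (ler_wpM2l (Q0 m j)); apply: Hm.
have : 0 <= (1 - b) * x m 0 by rewrite mulrBl mul1r subr_ge0.
by rewrite pmulr_rge0 // subr_gt0.
Qed.

Lemma cmp_le (R : realFieldType) (n : nat) (Q : 'M[R]_n) (b : R) (x y : 'cV[R]_n) :
  stochm Q -> 0 <= b < 1 ->
  (forall i, ((1%:M - b *: Q) *m y) i 0 <= ((1%:M - b *: Q) *m x) i 0) ->
  forall i, y i 0 <= x i 0 /\
    ((1%:M - b *: Q) *m x) i 0 - ((1%:M - b *: Q) *m y) i 0 <= x i 0 - y i 0.
Proof.
move=> HQ Hb H.
have Hd : forall i, ((1%:M - b *: Q) *m (x - y)) i 0 =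
   ((1%:M - b *: Q) *m x) i 0 - ((1%:M - b *: Q) *m y) i 0.
  by move=> i; rewrite mulmxBr mxE [X in _ + X]mxE.
have Hpos : forall i, 0 <= (x - y) i 0.
  apply: (nonneg_sol HQ Hb) => i.
  rewrite -subr_ge0 -entryM Hd subr_ge0; exact: H.
have Hxy : forall i, (x - y) i 0 = x i 0 - y i 0.
  by move=> i; rewrite mxE [X in _ + X]mxE.
move=> i; split; first by rewrite -subr_ge0 -Hxy Hpos.
rewrite -Hd entryM Hxy.
rewrite lerBlDr lerDl; apply: mulr_ge0; first by case/andP: Hb.
apply: sumr_ge0 => j _; apply: mulr_ge0; [exact: HQ.1 | exact: Hpos].
Qed.

Lemma unit_M (R : realFieldType) (n : nat) (Q : 'M[R]_n) (b : R) :
  stochm Q -> 0 <= b < 1 -> (1%:M - b *: Q) \in unitmx.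
Proof.
move=> HQ Hb.
rewrite -unitmx_tr unitmxE unitfE; apply/negP => /det0P [v vn0 Hv].
have HA : (1%:M - b *: Q) *m v^T = 0.
  by rewrite -[_ *m _]trmxK trmx_mul trmxK Hv trmx0.
have H0 : forall i, 0 = v^T i 0 - b * \sum_j Q i j * v^T j 0.
  by move=> i; rewrite -entryM HA mxE.
have Hp : forall i, 0 <= v^T i 0.
  by apply: (nonneg_sol HQ Hb) => i; rewrite -(subr0_eq (esym (H0 i))).
have Hn : forall i, 0 <= (- v^T) i 0.
  apply: (nonneg_sol HQ Hb) => i.
  have -> : \sum_j Q i j * (- v^T) j 0 = - \sum_j Q i j * v^T j 0.
    by rewrite -sumrN; apply: eq_bigr => j _; rewrite mxE mulrN.
  by rewrite mxE mulrN -(subr0_eq (esym (H0 i))).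
move/negP: vn0; apply; apply/eqP/matrixP => i j.
have := Hp j; have := Hn j; rewrite !mxE oppr_ge0 => h1 h2.
by rewrite (ord1 i); apply/eqP; rewrite eq_le h1 h2.
Qed.

Definition rh (R : realFieldType) (n : nat) (B : 'I_n -> finType)
  (rr : forall s, B s -> R) (h : forall s, B s -> R) : 'cV[R]_n :=
  \col_s \sum_(a : B s) h s a * rr s a.
Definition Qh (R : realFieldType) (n : nat) (B : 'I_n -> finType)
  (tt : forall s, B s -> 'I_n -> R) (h : forall s, B s -> R) : 'M[R]_n :=
  \matrix_(s, t) \sum_(a : B s) h s a * tt s a t.
Definition stochp (R : realFieldType) (n : nat) (B : 'I_n -> finType)
  (h : forall s, B s -> R) : Prop :=
  (forall s a, 0 <= h s a) /\ (forall s, \sum_(a : B s) h s a = 1).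
Definition ttok (R : realFieldType) (n : nat) (B : 'I_n -> finType)
  (tt : forall s, B s -> 'I_n -> R) : Prop :=
  (forall s a t, 0 <= tt s a t) /\ (forall s a, \sum_t tt s a t = 1).
Definition valp (R : realFieldType) (n : nat) (B : 'I_n -> finType)
  (rr : forall s, B s -> R) (tt : forall s, B s -> 'I_n -> R) (b : R)
  (h : forall s, B s -> R) : 'cV[R]_n :=
  invmx (1%:M - b *: Qh tt h) *m rh rr h.

Lemma pure_sum (R : realFieldType) (B : finType) (h : B -> R) (b0 : B) (F : B -> R) :
  (forall a, 0 <= h a) -> \sum_a h a = 1 -> h b0 = 1 ->
  \sum_a h a * F a = F b0.
Proof.
move=> h0 h1 hb.
have hz : forall a, a != b0 -> h a = 0.
  move=> a ne.
  have : \sum_(a | a != b0) h a = 0.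
    by move: h1; rewrite (bigD1 b0) //= hb; lra.
  move/psumr_eq0P => H; apply: H => //; move=> i _; exact: h0.
rewrite (bigD1 b0) //= hb mul1r big1 ?addr0 // => a ne.
by rewrite hz // mul0r.
Qed.

Lemma Qh_stoch (R : realFieldType) (n : nat) (B : 'I_n -> finType)
  (tt : forall s, B s -> 'I_n -> R) (h : forall s, B s -> R) :
  ttok tt -> stochp h -> stochm (Qh tt h).
Proof.
move=> [t0 t1] [h0 h1]; split.
  move=> i j; rewrite mxE; apply: sumr_ge0 => a _; exact: mulr_ge0.
move=> i; under eq_bigr do rewrite mxE.
rewrite exchange_big /= -[RHS](h1 i); apply: eq_bigr => a _.
by rewrite -mulr_sumr t1 mulr1.
Qed.

Lemma val_eq (R : realFieldType) (n : nat) (B : 'I_n -> finType)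
  (rr : forall s, B s -> R) (tt : forall s, B s -> 'I_n -> R) (b : R)
  (h : forall s, B s -> R) :
  ttok tt -> stochp h -> 0 <= b < 1 ->
  (1%:M - b *: Qh tt h) *m valp rr tt b h = rh rr h.
Proof.
move=> Ht Hh Hb; rewrite /valp mulKVmx //; apply: unit_M => //; exact: Qh_stoch.
Qed.

Lemma pure_rh (R : realFieldType) (n : nat) (B : 'I_n -> finType)
  (rr : forall s, B s -> R) (tt : forall s, B s -> 'I_n -> R)
  (h : forall s, B s -> R) (c : forall s, B s) :
  stochp h -> (forall s, h s (c s) = 1) ->
  (forall s, rh rr h s 0 = rr s (c s)) /\ (forall s t, Qh tt h s t = tt s (c s) t).
Proof.
move=> [h0 h1] hc; split => *; rewrite mxE; apply: pure_sum => //; exact: h0.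
Qed.

Lemma closed_form (R : realFieldType) (n : nat) (B : 'I_n -> finType)
  (rr : forall s, B s -> R) (tt : forall s, B s -> 'I_n -> R)
  (hs : forall s, B s -> R) (bb : forall s, B s) (p : 'I_n -> R) (b : R) :
  ttok tt -> stochp hs -> (forall s, hs s (bb s) = 1) ->
  \sum_s p s = 1 -> (forall s t, Qh tt hs s t = p t) -> 0 <= b < 1 ->
  forall t, valp rr tt b hs t 0 =
    rr t (bb t) + b / (1 - b) * \sum_u p u * rr u (bb u).
Proof.
move=> Ht Hh Hc Hp1 HP Hb.
have [Hr _] := pure_rh rr tt Hh Hc.
set rho := \sum_u p u * rr u (bb u).
set c := b / (1 - b) * rho.
have hc : c - b * c = b * rho.
  have nz : 1 - b != 0 by case/andP: Hb => _ b1; rewrite subr_eq0 eq_sym lt_eqF.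
  rewrite /c; field.
  exact: nz.
set x : 'cV[R]_n := \col_t (rr t (bb t) + c).
have HQ := Qh_stoch Ht Hh.
have Hx : forall i, ((1%:M - b *: Qh tt hs) *m x) i 0 = rh rr hs i 0.
  move=> i; rewrite entryM Hr mxE.
  under eq_bigr do rewrite HP mxE mulrDr.
  rewrite big_split /= -mulr_suml Hp1 mul1r -/rho; lra.
have Hv := val_eq rr Ht Hh Hb.
have H1 := cmp_le (x := x) (y := valp rr tt b hs) HQ Hb.
have H2 := cmp_le (x := valp rr tt b hs) (y := x) HQ Hb.
move=> t.
have -> : rr t (bb t) + c = x t 0 by rewrite mxE.
apply/eqP; rewrite eq_le; apply/andP; split.
  by apply: (H1 _ t).1 => i; rewrite Hv Hx.
by apply: (H2 _ t).1 => i; rewrite Hv Hx.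
Qed.

Lemma gap (R : realFieldType) (n : nat) (B : 'I_n -> finType)
  (rr : forall s, B s -> R) (tt : forall s, B s -> 'I_n -> R)
  (hs : forall s, B s -> R) (bb : forall s, B s) (p : 'I_n -> R) (b : R) :
  ttok tt -> stochp hs -> (forall s, hs s (bb s) = 1) ->
  \sum_s p s = 1 -> (forall s t, Qh tt hs s t = p t) -> 0 <= b < 1 ->
  forall s (a : B s),
  rr s a + b * \sum_t tt s a t * valp rr tt b hs t 0 - valp rr tt b hs s 0 =
  (rr s a - rr s (bb s)) - b * (\sum_u p u * rr u (bb u) - \sum_t tt s a t * rr t (bb t)).
Proof.
move=> Ht Hh Hc Hp1 HP Hb s a.
have Hcf := closed_form rr Ht Hh Hc Hp1 HP Hb.
set rho := \sum_u p u * rr u (bb u) in Hcf *.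
set c := b / (1 - b) * rho in Hcf.
have hc : c - b * c = b * rho.
  have nz : 1 - b != 0 by case/andP: Hb => _ b1; rewrite subr_eq0 eq_sym lt_eqF.
  rewrite /c; field.
  exact: nz.
under eq_bigr do rewrite Hcf mulrDr.
rewrite big_split /= -mulr_suml Ht.2 mul1r Hcf; lra.
Qed.

Lemma bell_hb (R : realFieldType) (n : nat) (B : 'I_n -> finType)
  (rr : forall s, B s -> R) (tt : forall s, B s -> 'I_n -> R)
  (hs : forall s, B s -> R) (bb : forall s, B s) (p : 'I_n -> R) (b : R) :
  ttok tt -> stochp hs -> (forall s, hs s (bb s) = 1) ->
  \sum_s p s = 1 -> (forall s t, Qh tt hs s t = p t) -> 0 <= b < 1 ->
  (forall s h, stochp h -> valp rr tt b h s 0 <= valp rr tt b hs s 0) ->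
  forall s (a : B s),
  rr s a + b * \sum_t tt s a t * valp rr tt b hs t 0 - valp rr tt b hs s 0 <= 0.
Proof.
move=> Ht Hh Hc Hp1 HP Hb HNE s a.
rewrite leNgt; apply/negP => Hgt.
set c := dfwith bb a.
pose h' : forall t, B t -> R := fun t a' => (a' == c t)%:R.
have Hh' : stochp h'.
  split=> [t a'|t]; first by rewrite /h' ler0n.
  rewrite /h' (bigD1 (c t)) //= eqxx big1 ?addr0 // => a' /negbTE ->; done.
have Hc' : forall t, h' t (c t) = 1 by move=> t; rewrite /h' eqxx.
have [Hr' HQ'] := pure_rh rr tt Hh' Hc'.
have [_ HQs] := pure_rh rr tt Hh Hc.
have HQ := Qh_stoch Ht Hh'.
have Hgap := gap rr Ht Hh Hc Hp1 HP Hb.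
set v := valp rr tt b hs in Hgt Hgap *.
have Hw := val_eq rr Ht Hh' Hb.
set w := valp rr tt b h' in Hw.
have Hv : forall i, ((1%:M - b *: Qh tt h') *m v) i 0 =
    rr i (c i) - (rr i (c i) + b * \sum_t tt i (c i) t * v t 0 - v i 0).
  move=> i; rewrite entryM; under eq_bigr do rewrite HQ'; lra.
have Hle : forall i, ((1%:M - b *: Qh tt h') *m v) i 0 <=
                     ((1%:M - b *: Qh tt h') *m w) i 0.
  move=> i; rewrite Hw Hr' Hv lerBlDr lerDl.
  have [<- | ne] := eqVneq s i.
    by rewrite /c dfwith_in ltW.
  rewrite /c dfwith_out // Hgap subrr.
  have -> : \sum_t tt i (bb i) t * rr t (bb t) = \sum_u p u * rr u (bb u).
    by apply: eq_bigr => t _; rewrite -HQs HP.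
  by rewrite subrr mulr0 subr0.
have [_ H2] := cmp_le HQ Hb Hle s.
have := HNE s h' Hh'; rewrite -/w.
move: H2; rewrite Hw Hr' Hv /c dfwith_in; lra.
Qed.

Lemma mdp_main (R : realFieldType) (n : nat) (B : 'I_n -> finType)
  (rr : forall s, B s -> R) (tt : forall s, B s -> 'I_n -> R)
  (hs : forall s, B s -> R) (bb : forall s, B s) (p : 'I_n -> R) (hb b : R) :
  ttok tt -> stochp hs -> (forall s, hs s (bb s) = 1) ->
  \sum_s p s = 1 -> (forall s t, Qh tt hs s t = p t) -> 0 <= hb < 1 ->
  (forall s (a : B s), \sum_t tt s a t * rr t (bb t) <= \sum_u p u * rr u (bb u)) ->
  (forall s h, stochp h -> valp rr tt hb h s 0 <= valp rr tt hb hs s 0) ->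
  hb <= b < 1 ->
  forall s h, stochp h -> valp rr tt b h s 0 <= valp rr tt b hs s 0.
Proof.
move=> Ht Hh Hc Hp1 HP Hhb HC3 HNE /andP[hbb b1] s h Hh'.
have Hb : 0 <= b < 1 by apply/andP; split => //; case/andP: Hhb => h0 _; exact: le_trans hbb.
have Hbell : forall s (a : B s),
   rr s a + b * \sum_t tt s a t * valp rr tt b hs t 0 - valp rr tt b hs s 0 <= 0.
  move=> s' a.
  have H1 := bell_hb Ht Hh Hc Hp1 HP Hhb HNE a.
  rewrite (gap rr Ht Hh Hc Hp1 HP Hb).
  rewrite (gap rr Ht Hh Hc Hp1 HP Hhb) in H1.
  have := HC3 s' a; rewrite -subr_ge0 => D0.
  have : hb * (\sum_u p u * rr u (bb u) - \sum_t tt s' a t * rr t (bb t)) <=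
          b * (\sum_u p u * rr u (bb u) - \sum_t tt s' a t * rr t (bb t)).
    by apply: ler_wpM2r.
  lra.
have HQ := Qh_stoch Ht Hh'.
have [Hh0 Hh1] := Hh'.
have Hw := val_eq rr Ht Hh' Hb.
set v := valp rr tt b hs in Hbell *.
set w := valp rr tt b h in Hw *.
have Hle : forall i, ((1%:M - b *: Qh tt h) *m w) i 0 <=
                     ((1%:M - b *: Qh tt h) *m v) i 0.
  move=> i; rewrite Hw entryM mxE.
  have E : \sum_j Qh tt h i j * v j 0 =
      \sum_(a : B i) h i a * \sum_t tt i a t * v t 0.
    under eq_bigr do rewrite mxE mulr_suml.
    rewrite exchange_big /=; apply: eq_bigr => a _; rewrite mulr_sumr.
    by apply: eq_bigr => t _; rewrite mulrA.
  rewrite E -subr_ge0.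
  have -> : v i 0 - b * (\sum_(a : B i) h i a * \sum_t tt i a t * v t 0) -
      \sum_(a : B i) h i a * rr i a =
      \sum_(a : B i) h i a * (- (rr i a + b * \sum_t tt i a t * v t 0 - v i 0)).
    rewrite -{1}[v i 0]mul1r -(Hh1 i) mulr_suml mulr_sumr -!sumrB.
    by apply: eq_bigr => a _; ring.
  apply: sumr_ge0 => a _; apply: mulr_ge0; first exact: Hh0.
  by rewrite oppr_ge0; apply: Hbell.
exact: (cmp_le HQ Hb Hle s).1.
Qed.

Lemma P1_eq (R : realFieldType) (n : nat) (G : game R n) (gs : strat2 G)
  (a2 : forall s : 'I_n, A2 G s) (Hg : is_strat2 gs) (Hpg : forall s, gs s (a2 s) = 1)
  (f : strat1 G) :
  P_fg f gs = Qh (B := fun s => A1 G s) (fun s a => trans G s a (a2 s)) f.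
Proof.
have [g0 g1] := Hg.
  apply/matrixP => s t; rewrite !mxE; apply: eq_bigr => a _.
  transitivity (\sum_(a' : A2 G s) gs s a' * (f s a * trans G s a a' t)).
    by apply: eq_bigr => a' _; ring.
  by apply: pure_sum.
Qed.

Lemma P2_eq (R : realFieldType) (n : nat) (G : game R n) (fs : strat1 G)
  (a1 : forall s : 'I_n, A1 G s) (Hf : is_strat1 fs) (Hpf : forall s, fs s (a1 s) = 1)
  (g : strat2 G) :
  P_fg fs g = Qh (B := fun s => A2 G s) (fun s a => trans G s (a1 s) a) g.
Proof.
have [f0 f1] := Hf.
  apply/matrixP => s t; rewrite !mxE.
  transitivity (\sum_(a : A1 G s) fs s a * \sum_(a' : A2 G s) g s a' * trans G s a a' t).
    apply: eq_bigr => a _; rewrite mulr_sumr; apply: eq_bigr => a' _; ring.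
  exact: (@pure_sum _ _ (fs s) (a1 s) (fun a => \sum_(a' : A2 G s) g s a' * trans G s a a' t)).
Qed.

Lemma v1_eq (R : realFieldType) (n : nat) (G : game R n) (gs : strat2 G)
  (a2 : forall s : 'I_n, A2 G s) (Hg : is_strat2 gs) (Hpg : forall s, gs s (a2 s) = 1)
  (b : R) (f : strat1 G) :
  v1 b f gs = valp (B := fun s => A1 G s) (fun s a => rew1 G s a (a2 s))
                   (fun s a => trans G s a (a2 s)) b f.
Proof.
have [g0 g1] := Hg.
have E1 : rew1_fg f gs = rh (B := fun s => A1 G s) (fun s a => rew1 G s a (a2 s)) f.
  apply/matrixP => s j; rewrite !mxE; apply: eq_bigr => a _.
  transitivity (\sum_(a' : A2 G s) gs s a' * (f s a * rew1 G s a a')).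
    by apply: eq_bigr => a' _; ring.
  by apply: pure_sum.
have E2 : P_fg f gs = Qh (B := fun s => A1 G s) (fun s a => trans G s a (a2 s)) f.
  apply/matrixP => s t; rewrite !mxE; apply: eq_bigr => a _.
  transitivity (\sum_(a' : A2 G s) gs s a' * (f s a * trans G s a a' t)).
    by apply: eq_bigr => a' _; ring.
  by apply: pure_sum.
by rewrite /v1 /valp E1 E2.
Qed.

Lemma v2_eq (R : realFieldType) (n : nat) (G : game R n) (fs : strat1 G)
  (a1 : forall s : 'I_n, A1 G s) (Hf : is_strat1 fs) (Hpf : forall s, fs s (a1 s) = 1)
  (b : R) (g : strat2 G) :
  v2 b fs g = valp (B := fun s => A2 G s) (fun s a => rew2 G s (a1 s) a)
                   (fun s a => trans G s (a1 s) a) b g.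
Proof.
have [f0 f1] := Hf.
have E1 : rew2_fg fs g = rh (B := fun s => A2 G s) (fun s a => rew2 G s (a1 s) a) g.
  apply/matrixP => s j; rewrite !mxE.
  transitivity (\sum_(a : A1 G s) fs s a * \sum_(a' : A2 G s) g s a' * rew2 G s a a').
    apply: eq_bigr => a _; rewrite mulr_sumr; apply: eq_bigr => a' _; ring.
  exact: (@pure_sum _ _ (fs s) (a1 s) (fun a => \sum_(a' : A2 G s) g s a' * rew2 G s a a')).
have E2 : P_fg fs g = Qh (B := fun s => A2 G s) (fun s a => trans G s (a1 s) a) g.
  apply/matrixP => s t; rewrite !mxE.
  transitivity (\sum_(a : A1 G s) fs s a * \sum_(a' : A2 G s) g s a' * trans G s a a' t).
    apply: eq_bigr => a _; rewrite mulr_sumr; apply: eq_bigr => a' _; ring.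
  exact: (@pure_sum _ _ (fs s) (a1 s) (fun a => \sum_(a' : A2 G s) g s a' * trans G s a a' t)).
by rewrite /v2 /valp E1 E2.
Qed.

Theorem theorem2 (R : realFieldType) (n : nat) (G : game R n)
  (HG : game_wf G) (fs : strat1 G) (gs : strat2 G)
  (Hf : is_strat1 fs) (Hg : is_strat2 gs) (hb : R) (Hhb : 0 <= hb < 1)
  (HNE : disc_NE hb fs gs)
  (* (C1) purity *)
  (a1 : forall s : 'I_n, A1 G s) (a2 : forall s : 'I_n, A2 G s)
  (Hpf : forall s, fs s (a1 s) = 1) (Hpg : forall s, gs s (a2 s) = 1)
  (* (C2) all rows of P(fs,gs) equal p *)
  (p : 'I_n -> R) (Hp0 : forall s, 0 <= p s) (Hp1 : \sum_(s < n) p s = 1)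
  (HP : forall s s', P_fg fs gs s s' = p s')
  (* (C3) *)
  (HC31 : forall (s : 'I_n) (b1 : A1 G s),
     \sum_(s' < n) trans G s b1 (a2 s) s' * rew1 G s' (a1 s') (a2 s')
       <= \sum_(s' < n) p s' * rew1 G s' (a1 s') (a2 s'))
  (HC32 : forall (s : 'I_n) (b2 : A2 G s),
     \sum_(s' < n) trans G s (a1 s) b2 s' * rew2 G s' (a1 s') (a2 s')
       <= \sum_(s' < n) p s' * rew2 G s' (a1 s') (a2 s')) :
  BNE fs gs.
Proof.
have [_ [_ [t0 t1]]] := HG.
exists hb; split => // b Hb s; split.
- move=> f Hf'; rewrite !(v1_eq Hg Hpg).
  have Ht : ttok (B := fun s => A1 G s) (fun s a => trans G s a (a2 s)).
    by split=> *; [apply: t0 | apply: t1].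
  have HQ : forall s t, Qh (B := fun s => A1 G s) (fun s a => trans G s a (a2 s)) fs s t = p t.
    by move=> s' t; rewrite -(P1_eq Hg Hpg) HP.
  have HN : forall s' h, stochp (B := fun s => A1 G s) h ->
     valp (B := fun s => A1 G s) (fun s a => rew1 G s a (a2 s))
                   (fun s a => trans G s a (a2 s)) hb h s' 0 <=
     valp (B := fun s => A1 G s) (fun s a => rew1 G s a (a2 s))
                   (fun s a => trans G s a (a2 s)) hb fs s' 0.
    by move=> s' h Hh; rewrite -!(v1_eq Hg Hpg); apply: (HNE s').1.
  exact: (mdp_main Ht Hf Hpf Hp1 HQ Hhb HC31 HN Hb).
- move=> g Hg'; rewrite !(v2_eq Hf Hpf).
  have Ht : ttok (B := fun s => A2 G s) (fun s a => trans G s (a1 s) a).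
    by split=> *; [apply: t0 | apply: t1].
  have HQ : forall s t, Qh (B := fun s => A2 G s) (fun s a => trans G s (a1 s) a) gs s t = p t.
    by move=> s' t; rewrite -(P2_eq Hf Hpf) HP.
  have HN : forall s' h, stochp (B := fun s => A2 G s) h ->
     valp (B := fun s => A2 G s) (fun s a => rew2 G s (a1 s) a)
                   (fun s a => trans G s (a1 s) a) hb h s' 0 <=
     valp (B := fun s => A2 G s) (fun s a => rew2 G s (a1 s) a)
                   (fun s a => trans G s (a1 s) a) hb gs s' 0.
    by move=> s' h Hh; rewrite -!(v2_eq Hf Hpf); apply: (HNE s').2.
  exact: (mdp_main Ht Hg Hpg Hp1 HQ Hhb HC32 HN Hb).
Qed.
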